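(* Let $V\in\mathcal{H}^{r\times n}$ and $Y\in\mathcal{H}^{n\times r}$ be left and right canonical matrices, respectively, for $T$ at $\lambda_0$. Then $VTY$ is invertible (as a meromorphic matrix), and $\Delta^{-1}VTY\Delta^{-1}\doteq\Delta^{-1}$ holds if and only if $(VTY)^{-1}\doteq\Delta^{-1}$.
   Context: Let $\Omega\subset\mathbb{C}$ be open and $\lambda_0\in\Omega$ fixed. $\mathcal{H}$ denotes the ring of holomorphic functions on $\Omega$, and $\mathcal{H}_0$ the ring of functions holomorphic in some neighborhood of $\lambda_0$. Write $\chi_0(\lambda)=\lambda-\lambda_0$. A matrix $M\in\mathcal{H}_0^{n\times n}$ is unimodular if it has an inverse in $\mathcal{H}_0^{n\times n}$. For meromorphic matrices $M_1,M_2$ of equal size, $M_1\doteq M_2$ means that $M_2-M_1$ is holomorphic in a neighborhood of $\lambda_0$. Throughout, $T\in\mathcal{H}^{n\times n}$ with $\det T$ not identically zero and $\det T(\lambda_0)=0$, and $r=\dim\ker T(\lambda_0)$. There exist unimodular $U_L,U_R\in\mathcal{H}_0^{n\times n}$ and uniquely determined integers $m_1\ge\cdots\ge m_n\ge 0$ (the partial multiplicities) with $U_LTU_R=\mathrm{diag}(\chi_0^{m_1},\dots,\chi_0^{m_n})$; $m_i>0$ exactly for $i\le r$. Set $\Delta=\mathrm{diag}(\chi_0^{m_1},\dots,\chi_0^{m_r})$. A root function for $T$ at $\lambda_0$ is $y\in\mathcal{H}^n$ with $y(\lambda_0)\neq0$ and $T(\lambda_0)y(\lambda_0)=0$; its multiplicity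 $\nu(y)$ is the order of the zero of $Ty$ at $\lambda_0$. A right canonical matrix for $T$ at $\lambda_0$ is $Y\in\mathcal{H}^{n\times r}$ whose columns $y_1,\dots,y_r$ are root functions such that (a) $y_1(\lambda_0),\dots,y_r(\lambda_0)$ are linearly independent, (b) $\sum_{i=1}^r\nu(y_i)=\sum_{i=1}^r m_i$, (c) $\nu(y_1)\ge\cdots\ge\nu(y_r)$. A left root function is a row vector $v\in\mathcal{H}^{1\times n}$ with $v(\lambda_0)\ne0$ and $v(\lambda_0)T(\lambda_0)=0$, with multiplicity the order of the zero of $vT$ at $\lambda_0$; a left canonical matrix $V\in\mathcal{H}^{r\times n}$ is defined analogously. *)

(* Defs.v *)
(* The complex plane is modelled as R[i] for an arbitrary R : realType,
   viewed as a numFieldType (hence a normed module over itself, so that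
   [derivable f z 1] is complex differentiability at z). *)
From HB Require Import structures.
From mathcomp Require Import all_boot all_order all_algebra.
From mathcomp Require Import complex.
From mathcomp Require Import all_classical all_reals topology normedtype derive.
Set Implicit Arguments. Unset Strict Implicit. Unset Printing Implicit Defensive.
Import Order.TTheory GRing.Theory Num.Theory.
Import numFieldNormedType.Exports.
Local Open Scope ring_scope.

Definition Cx (R : realType) : numFieldType := R[i].

Section Defs.
Variable R : realType.
Local Notation C := (Cx R).

Definition holo_on (U : set C) p q (f : C -> 'M[C]_(p, q)) : Prop :=
  forall (i : 'I_p) (j : 'I_q) (z : C), U z ->
    derivable (fun w : C => f w i j) z 1.

Definition holo (Omega : set C) p q (f : C -> 'M[C]_(p, q)) : Prop :=
  holo_on Omega f.

Definition near_pt (l0 : C) (P : C -> Prop) : Prop :=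
  exists e : C, 0 < e /\ forall z : C, `|z - l0| < e -> P z.

Definition holo0 (l0 : C) p q (f : C -> 'M[C]_(p, q)) : Prop :=
  exists e : C, 0 < e /\ holo_on [set z | `|z - l0| < e] f.

Definition unimodular0 (l0 : C) n (U : C -> 'M[C]_n) : Prop :=
  holo0 l0 U /\
  exists Ui : C -> 'M[C]_n, holo0 l0 Ui /\
    near_pt l0 (fun z => U z *m Ui z = 1%:M /\ Ui z *m U z = 1%:M).

Definition chi0 (l0 : C) (z : C) : C := z - l0.

(* The integers m_0 >= ... >= m_{n-1} (0-based) are the partial
   multiplicities of T at l0: there are unimodular U_L, U_R in H_0^{n x n}
   with U_L T U_R = diag(chi_0^{m_0}, ..., chi_0^{m_{n-1}}). *)
Definition partial_multiplicities (l0 : C) n (T : C -> 'M[C]_n)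
    (m : nat -> nat) : Prop :=
  (forall i j : 'I_n, (i <= j)%N -> (m j <= m i)%N) /\
  exists UL UR : C -> 'M[C]_n,
    unimodular0 l0 UL /\ unimodular0 l0 UR /\
    near_pt l0 (fun z =>
      UL z *m T z *m UR z = diag_mx (\row_(i < n) chi0 l0 z ^+ m i)).

Definition zero_order (l0 : C) p q (f : C -> 'M[C]_(p, q)) (k : nat) : Prop :=
  exists g : C -> 'M[C]_(p, q), holo0 l0 g /\ g l0 != 0 /\
    near_pt l0 (fun z => f z = chi0 l0 z ^+ k *: g z).

Definition root_fun (Omega : set C) (l0 : C) n (T : C -> 'M[C]_n)
    (y : C -> 'cV[C]_n) : Prop :=
  holo Omega y /\ y l0 != 0 /\ T l0 *m y l0 = 0.

Definition left_root_fun (Omega : set C) (l0 : C) n (T : C -> 'M[C]_n)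
    (v : C -> 'rV[C]_n) : Prop :=
  holo Omega v /\ v l0 != 0 /\ v l0 *m T l0 = 0.

Definition right_canonical (Omega : set C) (l0 : C) n r
    (T : C -> 'M[C]_n) (m : nat -> nat) (Y : C -> 'M[C]_(n, r)) : Prop :=
  holo Omega Y /\
  (forall i : 'I_r, root_fun Omega l0 T (fun z => col i (Y z))) /\
  \rank (Y l0) = r /\
  exists nu : 'I_r -> nat,
    (forall i : 'I_r, zero_order l0 (fun z => T z *m col i (Y z)) (nu i)) /\
    (\sum_(i < r) nu i = \sum_(i < r) m i)%N /\
    (forall i j : 'I_r, (i <= j)%N -> (nu j <= nu i)%N).

Definition left_canonical (Omega : set C) (l0 : C) n r
    (T : C -> 'M[C]_n) (m : nat -> nat) (V : C -> 'M[C]_(r, n)) : Prop :=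
  holo Omega V /\
  (forall i : 'I_r, left_root_fun Omega l0 T (fun z => row i (V z))) /\
  \rank (V l0) = r /\
  exists nu : 'I_r -> nat,
    (forall i : 'I_r, zero_order l0 (fun z => row i (V z) *m T z) (nu i)) /\
    (\sum_(i < r) nu i = \sum_(i < r) m i)%N /\
    (forall i j : 'I_r, (i <= j)%N -> (nu j <= nu i)%N).

(* A square holomorphic matrix function M is invertible as a meromorphic
   matrix (germ at l0): det M does not vanish identically near l0. *)
Definition mero_invertible (l0 : C) r (M : C -> 'M[C]_r) : Prop :=
  ~ near_pt l0 (fun z => \det (M z) = 0).

(* M1 =. M2 : M2 - M1 is holomorphic in a neighbourhood of l0, i.e. agrees
   on a punctured disc around l0 with a function holomorphic on the disc.
   (Meromorphic matrices are represented by their values off the poles.) *)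
Definition mero_eq (l0 : C) p q (M1 M2 : C -> 'M[C]_(p, q)) : Prop :=
  exists e : C, 0 < e /\
  exists H : C -> 'M[C]_(p, q), holo_on [set z | `|z - l0| < e] H /\
    forall z : C, 0 < `|z - l0| < e -> M2 z - M1 z = H z.

Definition Delta_inv (l0 : C) r (m : nat -> nat) (z : C) : 'M[C]_r :=
  diag_mx (\row_(i < r) (chi0 l0 z ^+ m i)^-1).

End Defs.

(* Main.v *)
Require Import Defs.
From HB Require Import structures.
From mathcomp Require Import all_boot all_order all_algebra.
From mathcomp Require Import complex.
From mathcomp Require Import all_classical all_reals topology normedtype derive.
From mathcomp Require Import zify fingroup perm.
Import Order.TTheory GRing.Theory Num.Theory.
Import numFieldNormedType.Exports.
Local Open Scope ring_scope.
Set Implicit Arguments. Unset Strict Implicit. Unset Printing Implicit Defensive.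

Lemma sum_eq_le (I : finType) (a b : I -> nat) :
  (forall i, (a i <= b i)%N) -> (\sum_i a i = \sum_i b i)%N -> forall i, a i = b i.
Proof.
move=> hab hs i; apply/eqP; rewrite eqn_leq hab /=; apply/negP => /negP.
rewrite -ltnNge => hlt.
have : (\sum_i a i < \sum_i b i)%N.
  rewrite (bigD1 i) //= [X in (_ < X)%N](bigD1 i) //=.
  by rewrite -addSn leq_add // leq_sum.
by rewrite hs ltnn.
Qed.

Section Alg.
Variable F : fieldType.

Lemma pidE n k : (pid_mx k : 'M[F]_n) = diag_mx (\row_(i < n) (i < k)%N%:R).
Proof.
apply/matrixP => i j; rewrite !mxE.
by case: (eqVneq i j) => [->|ne]; rewrite ?eqxx ?andTb //= mulr0n; case: (i == j :> nat) / eqP => [/val_inj|]; [move/eqP: ne|].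
Qed.

Lemma rank_witness n r (X : 'M[F]_(n, r)) : \rank X = r ->
  forall k : 'I_r, exists i : 'I_r, exists j : 'I_n,
    [/\ (i <= k)%N, (k <= j)%N & X j i != 0].
Proof.
move=> rX k.
case: (boolP [exists i : 'I_r, [exists j : 'I_n, [&& (i <= k)%N, (k <= j)%N & X j i != 0]]]).
  by move=> /existsP [i /existsP [j /and3P [h1 h2 h3]]]; exists i, j.
move=> hn; exfalso.
have H0 : forall (i : 'I_r) (j : 'I_n), (i <= k)%N -> (k <= j)%N -> X j i = 0.
  move=> i j ik kj; apply/eqP/negPn/negP => hne; move/negP: hn; apply.
  by apply/existsP; exists i; apply/existsP; exists j; rewrite ik kj hne.
have kr : (k < r)%N := ltn_ord k.
have rn : (r <= n)%N by rewrite -rX rank_leq_row.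
set S : 'M[F]_r := pid_mx k.+1.
have rS : \rank (X *m S) = k.+1.
  rewrite -mxrank_tr trmx_mul mxrankMfree ?mxrank_tr ?rank_pid_mx //.
  by rewrite /row_free mxrank_tr rX.
have eq1 : X *m S = (pid_mx k : 'M[F]_n) *m (X *m S).
  rewrite /S !pidE mul_diag_mx mul_mx_diag; apply/matrixP => j i; rewrite !mxE.
  case: (ltnP j k) => jk; first by rewrite mul1r.
  case: (ltnP i k.+1) => ik; last by rewrite !mulr0.
  by rewrite H0 // ?mul0r ?mulr0.
have : (\rank (X *m S) <= k)%N.
  rewrite eq1; apply: leq_trans (mxrankM_maxl _ _) _.
  by rewrite rank_pid_mx // ltnW // (leq_trans kr rn).
by rewrite rS ltnn.
Qed.


Lemma copidE n k : (copid_mx k : 'M[F]_n) = diag_mx (\row_(i < n) (k <= i)%N%:R).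
Proof.
apply/matrixP => i j; rewrite /copid_mx pidE !mxE.
case: (eqVneq i j) => [->|ne]; last by rewrite !mulr0n subr0.
by rewrite !mulr1n; case: (ltnP j k) => h; rewrite ?subrr ?subr0.
Qed.

Lemma mult_struct n (m : nat -> nat)
  (mono : forall i j : 'I_n, (i <= j)%N -> (m j <= m i)%N) (D : 'M[F]_n)
  (hD : D = diag_mx (\row_(i < n) (0 : F) ^+ m i)) r (hr : r = (n - \rank D)%N) :
  (forall j : 'I_n, (r <= j)%N -> m j = 0%N) /\
  (forall i : 'I_n, (i < r)%N -> (0 < m i)%N).
Proof.
split.
  move=> j rj; apply/eqP; rewrite -leqn0 leqNgt; apply/negP => mj.
  have eqD : D = copid_mx j.+1 *m D.
    rewrite copidE mul_diag_mx hD; apply/matrixP => a b; rewrite !mxE.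
    case: (ltnP j a) => ja; first by rewrite mul1r.
    have : (0 < m a)%N by apply: leq_trans mj (mono _ _ ja).
    by move=> h; rewrite expr0n eqn0Ngt h /= mulr0n mul0rn mulr0.
  have : (\rank D <= n - j.+1)%N.
    by rewrite eqD; apply: leq_trans (mxrankM_maxl _ _) _; rewrite rank_copid_mx.
  have := ltn_ord j; move: rj; rewrite hr.
  lia.
move=> i ir; rewrite lt0n; apply/negP => /eqP mi.
have eqC : (copid_mx i : 'M[F]_n) = D *m copid_mx i.
  rewrite copidE mul_mx_diag hD; apply/matrixP => a b; rewrite !mxE.
  case: (eqVneq a b) => [<-|ne]; last by rewrite !mulr0n mul0r.
  case: (ltnP a i) => ia; first by rewrite (_ : false%:R = 0 :> F) // mul0rn mulr0.
  have : m a = 0%N by apply/eqP; rewrite -leqn0 -mi mono.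
  by move=> ->; rewrite expr0 (_ : true%:R = 1 :> F) // mulr1.
have : (n - i <= \rank D)%N.
  rewrite -(rank_copid_mx F (ltnW (ltn_ord i))) eqC; exact: mxrankM_maxl.
have := ltn_ord i; move: ir; rewrite hr.
lia.
Qed.

Lemma det_eq_m r (m : nat -> nat) (K X : 'M[F]_r) :
  (forall a b : 'I_r, (m b < m a)%N -> K a b = 0) ->
  (forall a b : 'I_r, (m a < m b)%N -> X a b = 0) ->
  (forall a b : 'I_r, m a = m b -> K a b = X a b) ->
  \det K = \det X.
Proof.
move=> hK hX hKX; rewrite /determinant; apply: eq_bigr => s _; congr (_ * _).
have sm : (\sum_(i < r) m (s i) = \sum_(i < r) m i)%N.
  by rewrite [RHS](reindex_inj (@perm_inj _ s)).
case: (boolP [forall i : 'I_r, m i == m (s i)]) => [/forallP hall|].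
  by apply: eq_bigr => i _; apply: hKX; apply/eqP.
rewrite negb_forall => /existsP [i0 hi0].
have ex1 : exists i : 'I_r, (m i < m (s i))%N.
  case: (boolP [exists i : 'I_r, m i < m (s i)]%N) => [/existsP [i hi]|]; first by exists i.
  rewrite negb_exists => /forallP hall; exfalso; move/eqP: hi0; apply.
  apply/esym; apply: (sum_eq_le (a := fun i : 'I_r => m (s i)) (b := fun i : 'I_r => m i)); last exact: sm.
  by move=> i; move: (hall i); rewrite -leqNgt.
have ex2 : exists i : 'I_r, (m (s i) < m i)%N.
  case: (boolP [exists i : 'I_r, m (s i) < m i]%N) => [/existsP [i hi]|]; first by exists i.
  rewrite negb_exists => /forallP hall; exfalso; move/eqP: hi0; apply.
  apply: (sum_eq_le (a := fun i : 'I_r => m i) (b := fun i : 'I_r => m (s i))); last exact: (esym sm).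
  by move=> i; move: (hall i); rewrite -leqNgt.
case: ex1 => i1 h1; case: ex2 => i2 h2.
rewrite (bigD1 i2) //= hK // mul0r (bigD1 i1) //= hX // mul0r //.
Qed.

Lemma split_prod r n (rn : (r <= n)%N) (P : 'M[F]_(r, n)) (K : 'M[F]_(n, r)) :
  (forall a (j : 'I_n), (r <= j)%N -> P a j = 0) ->
  P *m K = (\matrix_(a < r, b < r) P a (widen_ord rn b)) *m
           (\matrix_(a < r, b < r) K (widen_ord rn a) b).
Proof.
move=> hP; apply/matrixP => a b; rewrite !mxE.
rewrite (bigID (fun j : 'I_n => (j < r)%N)) /=.
rewrite [X in _ + X]big1 ?addr0; last by move=> j; rewrite -leqNgt => hj; rewrite hP ?mul0r.
rewrite (big_ord_narrow rn) /=.
by apply: eq_bigr => j _; rewrite !mxE.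
Qed.

Lemma zero_cols_rank r n (rn : (r <= n)%N) (P : 'M[F]_(r, n)) :
  (forall a (j : 'I_n), (r <= j)%N -> P a j = 0) ->
  (\rank P <= \rank (\matrix_(a < r, b < r) P a (widen_ord rn b)))%N.
Proof.
move=> hP.
have eP : P = (\matrix_(a < r, b < r) P a (widen_ord rn b)) *m pid_mx r.
  apply/matrixP => a j; rewrite !mxE.
  case: (ltnP j r) => jr.
    rewrite (bigD1 (Ordinal jr)) //= big1 ?addr0.
      by rewrite !mxE eqxx jr /= mulr1; congr (P a _); apply: val_inj.
    move=> b hb; rewrite !mxE.
    have -> : (b == j :> nat) = false.
      by apply/negP => /eqP e; move/eqP: hb; apply; apply: val_inj.
    by rewrite mulr0.
  rewrite hP // big1 // => b _; rewrite !mxE.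
  have -> : (b == j :> nat) = false.
    by apply/negP => /eqP e; move: (ltn_ord b); rewrite e ltnNge jr.
  by rewrite mulr0.
by rewrite {1}eP; exact: mxrankM_maxl.
Qed.


Lemma linv_eq r (A X : 'M[F]_r) : A \in unitmx -> X *m A = 1%:M -> invmx A = X.
Proof.
move=> uA hX; rewrite -[RHS]mulmx1 -(mulmxV uA) mulmxA hX mul1mx //.
Qed.

Lemma alg1 r (D Dl A H M : 'M[F]_r) :
  D *m Dl = 1%:M -> Dl *m D = 1%:M -> D - D *m A *m D = H ->
  M = 1%:M - H *m Dl -> M \in unitmx -> A \in unitmx ->
  D - invmx A = invmx M *m (- H).
Proof.
move=> h1 h2 hH hM uM uA.
have eDAD : D *m A *m D = D - H by rewrite -hH opprB addrC subrK.
have eA : A = Dl *m M.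
  have -> : A = Dl *m (D *m A *m D) *m Dl.
    by rewrite !mulmxA h2 mul1mx -mulmxA h1 mulmx1.
  by rewrite eDAD hM !mulmxBr mulmxBl h2 mul1mx mulmx1 !mulmxA.
have eiA : invmx A = invmx M *m D.
  apply: linv_eq => //; rewrite eA mulmxA -[invmx M *m D *m Dl]mulmxA h1 mulmx1.
  exact: mulVmx.
have eMD : M *m D = D - H by rewrite hM mulmxBl mul1mx -mulmxA h2 mulmx1.
rewrite eiA -{1}[D](mulKmx uM) eMD -mulmxBr; congr (_ *m _).
by rewrite addrAC subrr add0r.
Qed.

Lemma alg2 r (D Dl A H M : 'M[F]_r) :
  D *m Dl = 1%:M -> Dl *m D = 1%:M -> D - invmx A = H ->
  M = 1%:M - Dl *m H -> M \in unitmx -> A \in unitmx ->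
  D - D *m A *m D = - (H *m invmx M).
Proof.
move=> h1 h2 hH hM uM uA.
have eiA : invmx A = D *m M.
  by rewrite hM mulmxBr mulmx1 mulmxA h1 mul1mx -hH opprB addrC subrK.
have uiA : invmx A \in unitmx by rewrite unitmx_inv.
have eA : A = invmx M *m Dl.
  rewrite -[A]invmxK; apply: linv_eq => //.
  rewrite eiA mulmxA -[invmx M *m Dl *m D]mulmxA h2 mulmx1; exact: mulVmx.
have eDM : D *m M = D - H by rewrite -eiA -hH opprB addrC subrK.
rewrite eA !mulmxA -(mulmxA _ Dl D) h2 mulmx1.
rewrite -{1}[D](mulmxK uM) eDM -mulmxBl.
by rewrite addrAC subrr add0r mulNmx.
Qed.

End Alg.

Section T.
Variable R : realType.
Local Notation C := (Cx R).
Implicit Types (f g : C -> C) (z : C).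

Lemma dcst (c z : C) : derivable (fun _ : C => c) z 1.
Proof. exact: derivable_cst. Qed.
Lemma did z : derivable (fun w : C => w) z 1.
Proof. exact: derivable_id. Qed.
Lemma dadd f g z : derivable f z 1 -> derivable g z 1 -> derivable (fun w => f w + g w) z 1.
Proof. exact: derivableD. Qed.
Lemma dopp f z : derivable f z 1 -> derivable (fun w => - f w) z 1.
Proof. exact: derivableN. Qed.
Lemma dmul f g z : derivable f z 1 -> derivable g z 1 -> derivable (fun w => f w * g w) z 1.
Proof. exact: derivableM. Qed.
Lemma dinv f z : f z != 0 -> derivable f z 1 -> derivable (fun w => (f w)^-1) z 1.
Proof. exact: derivableV. Qed.
Lemma dcont f z : derivable f z 1 -> {for z, continuous f}.
Proof. by move=> /derivable1_diffP /differentiable_continuous. Qed.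

Lemma dsub f g z : derivable f z 1 -> derivable g z 1 -> derivable (fun w => f w - g w) z 1.
Proof. by move=> df dg; exact: (dadd df (dopp dg)). Qed.

Lemma dbig (I : eqType) (s : seq I) (P : pred I) (F : I -> C -> C) z :
  (forall i, P i -> derivable (F i) z 1) ->
  derivable (fun w => \sum_(i <- s | P i) F i w) z 1.
Proof.
move=> dF; elim: s => [|x s IH].
  have -> : (fun w => \sum_(i <- [::] | P i) F i w) = (fun _ => 0).
    by apply/funext => w; rewrite big_nil.
  exact: dcst.
have -> : (fun w => \sum_(i <- x :: s | P i) F i w) =
   (fun w => if P x then F x w + \sum_(i <- s | P i) F i w else \sum_(i <- s | P i) F i w).
  by apply/funext => w; rewrite big_cons.
case Px: (P x); last exact: IH.
exact: (dadd (dF x Px) IH).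
Qed.

Lemma dprod (I : eqType) (s : seq I) (P : pred I) (F : I -> C -> C) z :
  (forall i, P i -> derivable (F i) z 1) ->
  derivable (fun w => \prod_(i <- s | P i) F i w) z 1.
Proof.
move=> dF; elim: s => [|x s IH].
  have -> : (fun w => \prod_(i <- [::] | P i) F i w) = (fun _ => 1).
    by apply/funext => w; rewrite big_nil.
  exact: dcst.
have -> : (fun w => \prod_(i <- x :: s | P i) F i w) =
   (fun w => if P x then F x w * \prod_(i <- s | P i) F i w else \prod_(i <- s | P i) F i w).
  by apply/funext => w; rewrite big_cons.
case Px: (P x); last exact: IH.
exact: (dmul (dF x Px) IH).
Qed.

Lemma dexp f k z : derivable f z 1 -> derivable (fun w => f w ^+ k) z 1.
Proof.
move=> df; elim: k => [|k IH].
  have -> : (fun w => f w ^+ 0) = (fun _ => 1) by apply/funext => w; rewrite expr0.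
  exact: dcst.
have -> : (fun w => f w ^+ k.+1) = (fun w => f w * f w ^+ k) by apply/funext => w; rewrite exprS.
exact: (dmul df IH).
Qed.

Lemma dmuln f k z : derivable f z 1 -> derivable (fun w => f w *+ k) z 1.
Proof.
move=> df; have -> : (fun w => f w *+ k) = (fun w => f w * k%:R).
  by apply/funext => w; rewrite mulr_natr.
exact: (dmul df (@dcst (k%:R) z)).
Qed.

Lemma dchi (l0 : C) k z : derivable (fun w => chi0 l0 w ^+ k) z 1.
Proof.
have -> : (fun w => chi0 l0 w ^+ k) = (fun w => (w - l0) ^+ k) by [].
have h := dsub (@did z) (@dcst l0 z).
exact: (dexp h).
Qed.

Definition md p q (F : C -> 'M[C]_(p, q)) z :=
  forall i j, derivable (fun w => F w i j) z 1.

Lemma md_cst p q (A : 'M[C]_(p, q)) z : md (fun _ => A) z.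
Proof. by move=> i j; exact: dcst. Qed.

Lemma md_add p q (F G : C -> 'M[C]_(p, q)) z : md F z -> md G z ->
  md (fun w => F w + G w) z.
Proof.
move=> dF dG i j; have -> : (fun w => (F w + G w) i j) = (fun w => F w i j + G w i j).
  by apply/funext => w; rewrite mxE.
exact: (dadd (dF i j) (dG i j)).
Qed.

Lemma md_opp p q (F : C -> 'M[C]_(p, q)) z : md F z -> md (fun w => - F w) z.
Proof.
move=> dF i j; have -> : (fun w => (- F w) i j) = (fun w => - F w i j).
  by apply/funext => w; rewrite mxE.
exact: (dopp (dF i j)).
Qed.

Lemma md_mul p q s (F : C -> 'M[C]_(p, q)) (G : C -> 'M[C]_(q, s)) z :
  md F z -> md G z -> md (fun w => F w *m G w) z.
Proof.
move=> dF dG i j.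
have -> : (fun w => (F w *m G w) i j) = (fun w => \sum_(k <- index_enum 'I_q | true) F w i k * G w k j).
  by apply/funext => w; rewrite mxE.
by apply: dbig => k _; exact: (dmul (dF i k) (dG k j)).
Qed.

Lemma md_scale p q (a : C -> C) (F : C -> 'M[C]_(p, q)) z :
  derivable a z 1 -> md F z -> md (fun w => a w *: F w) z.
Proof.
move=> da dF i j; have -> : (fun w => (a w *: F w) i j) = (fun w => a w * F w i j).
  by apply/funext => w; rewrite mxE.
exact: (dmul da (dF i j)).
Qed.

Lemma md_det p (F : C -> 'M[C]_p) z : md F z -> derivable (fun w => \det (F w)) z 1.
Proof.
move=> dF; rewrite /determinant; apply: dbig => s _.
apply: dmul; first exact: dcst.
by apply: dprod => i _; apply: dF.
Qed.

Lemma md_adj p (F : C -> 'M[C]_p) z : md F z -> md (fun w => \adj (F w)) z.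
Proof.
move=> dF i j.
have -> : (fun w => (\adj (F w)) i j) =
   (fun w => (-1) ^+ (j + i) * \det (row' j (col' i (F w)))).
  by apply/funext => w; rewrite mxE /cofactor.
apply: dmul; first exact: dcst.
apply: md_det => a b.
have -> : (fun w => (row' j (col' i (F w))) a b) = (fun w => F w (lift j a) (lift i b)).
  by apply/funext => w; rewrite !mxE.
exact: dF.
Qed.

Lemma md_diag p (d : 'I_p -> C -> C) z : (forall i, derivable (d i) z 1) ->
  md (fun w => diag_mx (\row_i d i w)) z.
Proof.
move=> dd i j.
have -> : (fun w => (diag_mx (\row_i d i w)) i j) = (fun w => d i w *+ (i == j)).
  by apply/funext => w; rewrite !mxE.
exact: dmuln.
Qed.

Lemma md_col p q (F : C -> 'M[C]_(p, q)) z k : md F z -> md (fun w => col k (F w)) z.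
Proof.
move=> dF i j; have -> : (fun w => (col k (F w)) i j) = (fun w => F w i k).
  by apply/funext => w; rewrite mxE.
exact: dF.
Qed.

Lemma md_row p q (F : C -> 'M[C]_(p, q)) z k : md F z -> md (fun w => row k (F w)) z.
Proof.
move=> dF i j; have -> : (fun w => (row k (F w)) i j) = (fun w => F w k j).
  by apply/funext => w; rewrite mxE.
exact: dF.
Qed.

Lemma md_inv p (F : C -> 'M[C]_p) z : md F z -> \det (F z) != 0 ->
  md (fun w => (\det (F w))^-1 *: \adj (F w)) z.
Proof.
move=> dF d0; apply: md_scale; last exact: md_adj.
exact: (dinv d0 (md_det dF)).
Qed.


Lemma ballE (x y e : C) : ball x e y <-> `|x - y| < e.
Proof. by rewrite -ball_normE. Qed.

Lemma near_ptP (l0 : C) (P : C -> Prop) : near_pt l0 P <-> \forall z \near l0, P z.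
Proof.
split.
  move=> [e [e0 he]]; apply/nbhs_ballP; exists e => // z /ballE; rewrite distrC.
  exact: he.
move=> /nbhs_ballP [e e0 he]; exists e; split => // z hz; apply: he; apply/ballE.
by rewrite distrC.
Qed.

Lemma holo0_near (l0 : C) p q (f : C -> 'M[C]_(p, q)) : holo0 l0 f ->
  \forall z \near l0, md f z.
Proof.
move=> [e [e0 he]]; apply/near_ptP; exists e; split => // z hz i j.
exact: he.
Qed.

Lemma holo_near (O : set C) (l0 : C) p q (f : C -> 'M[C]_(p, q)) :
  open O -> O l0 -> holo O f -> \forall z \near l0, md f z.
Proof.
move=> oO Ol hf; have : nbhs l0 O by apply: open_nbhs_nbhs; split.
by apply: filterS => z Oz i j; apply: hf.
Qed.

Lemma near_punct (l0 : C) (P : C -> Prop) : (\forall z \near l0, P z) ->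
  exists z, z != l0 /\ P z.
Proof.
move=> /near_ptP [e [e0 he]]; exists (l0 + e / 2).
have e20 : 0 < e / 2 by rewrite divr_gt0 // ltr0n.
split.
  by rewrite -subr_eq0 addrC addKr gt_eqF.
apply: he; rewrite addrC addKr gtr0_norm //.
by rewrite ltr_pdivrMr ?ltr0n // ltr_pMr // ltr1n.
Qed.

Lemma dnear_neq0 f (l0 : C) : derivable f l0 1 -> f l0 != 0 ->
  \forall z \near l0, f z != 0.
Proof. by move=> /dcont hc h0; apply: cvgr_neq0 hc h0. Qed.

Lemma vanish f h (l0 : C) k : derivable f l0 1 -> derivable h l0 1 ->
  (\forall z \near l0, z != l0 -> f z = chi0 l0 z ^+ k * h z) ->
  f l0 = chi0 l0 l0 ^+ k * h l0.
Proof.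
move=> df dh hn; apply/eqP; rewrite -subr_eq0; apply/negPn/negP => hne.
have dg := dsub df (dmul (@dchi l0 k l0) dh).
have := dnear_neq0 dg hne.
move=> hg; have [z [zl [h1 h2]]] := near_punct (@filterS2 _ _ _ _ _ _ (fun z a b => conj a b) hg hn).
by move: h1; rewrite (h2 zl) subrr eqxx.
Qed.

Lemma mero_eq_near (l0 : C) p q (M1 M2 : C -> 'M[C]_(p, q)) : mero_eq l0 M1 M2 ->
  exists H, \forall z \near l0, md H z /\ (z != l0 -> M2 z - M1 z = H z).
Proof.
move=> [e [e0 [H [hH hE]]]]; exists H; apply/near_ptP; exists e; split => // z hz.
split; first by move=> i j; apply: hH.
by move=> zl; apply: hE; rewrite hz andbT normr_gt0 subr_eq0.
Qed.

Lemma near_mero_eq (l0 : C) p q (M1 M2 H : C -> 'M[C]_(p, q)) :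
  (\forall z \near l0, md H z /\ (z != l0 -> M2 z - M1 z = H z)) -> mero_eq l0 M1 M2.
Proof.
move=> /near_ptP [e [e0 he]]; exists e; split => //; exists H; split.
  by move=> i j z hz; apply: (he z hz).1.
move=> z /andP [h1 h2]; apply: (he z h2).2.
by rewrite -subr_eq0 -normr_gt0.
Qed.

End T.


Section More.
Variable F : fieldType.

Lemma rank_UAU n (UL ULi UR URi T : 'M[F]_n) :
  ULi *m UL = 1%:M -> UR *m URi = 1%:M ->
  \rank (UL *m T *m UR) = \rank T.
Proof.
move=> h1 h2; apply/eqP; rewrite eqn_leq; apply/andP; split.
  by apply: leq_trans (mxrankM_maxl _ _) _; exact: mxrankM_maxr.
have eT : T = ULi *m (UL *m T *m UR) *m URi.
  by rewrite !mulmxA h1 mul1mx -mulmxA h2 mulmx1.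
rewrite {1}eT; apply: leq_trans (mxrankM_maxl _ _) _; exact: mxrankM_maxr.
Qed.

Lemma diag_inv r (d : 'I_r -> F) : (forall i, d i != 0) ->
  diag_mx (\row_i (d i)^-1) *m diag_mx (\row_i d i) = 1%:M /\
  diag_mx (\row_i d i) *m diag_mx (\row_i (d i)^-1) = 1%:M.
Proof.
move=> hd; split; apply/matrixP => i j; rewrite mul_diag_mx !mxE;
  (case: (eqVneq i j) => [_|ne]; last by rewrite /= !mulr0n mulr0);
  by rewrite /= !mulr1n ?mulVf ?mulfV.
Qed.

Lemma entry_diag2 n r (f : 'I_n -> F) (h : 'I_r -> F) (A B : 'M[F]_(n, r)) :
  diag_mx (\row_k f k) *m A = B *m diag_mx (\row_k h k) ->
  forall j i, f j * A j i = B j i * h i.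
Proof.
move=> e j i; have := congr1 (fun M : 'M[F]_(n, r) => M j i) e; rewrite /= mul_diag_mx mul_mx_diag.
by rewrite !mxE.
Qed.

Lemma entry_mx_diag m n (f : 'I_n -> F) (A : 'M[F]_(m, n)) :
  A *m diag_mx (\row_k f k) = 0 -> forall a j, A a j * f j = 0.
Proof.
move=> e a j; have := congr1 (fun M : 'M[F]_(m, n) => M a j) e; rewrite /= mul_mx_diag.
by rewrite !mxE.
Qed.

End More.

Section T2.
Variable R : realType.
Local Notation C := (Cx R).

Lemma near2 (l0 : C) (P Q : C -> Prop) : (\forall z \near l0, P z) ->
  (\forall z \near l0, Q z) -> \forall z \near l0, P z /\ Q z.
Proof. by move=> hP hQ; apply: (@filterS2 _ _ _ _ _ _ (fun z a b => conj a b) hP hQ). Qed.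

Lemma cancel_vanish (f h : C -> C) (l0 : C) a b :
  derivable f l0 1 -> derivable h l0 1 ->
  (\forall z \near l0, chi0 l0 z ^+ a * f z = h z * chi0 l0 z ^+ b) ->
  (a <= b)%N -> f l0 = chi0 l0 l0 ^+ (b - a) * h l0.
Proof.
move=> df dh hn ab; apply: vanish => //.
apply: filterS hn => z hz zl.
have cz : chi0 l0 z ^+ a != 0 by rewrite expf_neq0 // /chi0 subr_eq0.
by apply: (mulfI cz); rewrite hz mulrA -exprD subnKC // mulrC.
Qed.

End T2.


Section Main.
Variable R : realType.
Local Notation C := (Cx R).

Lemma main_aux (Omega : set C) (l0 : C)
  (n r : nat) (T : C -> 'M[C]_n) (m : nat -> nat)
  (V : C -> 'M[C]_(r, n)) (Y : C -> 'M[C]_(n, r)) :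
  open Omega -> Omega l0 ->
  holo Omega T ->
  ~ (forall z, Omega z -> \det (T z) = 0) ->
  \det (T l0) = 0 ->
  r = (n - \rank (T l0))%N ->
  partial_multiplicities l0 T m ->
  left_canonical Omega l0 T m V ->
  right_canonical Omega l0 T m Y ->
  mero_invertible l0 (fun z => V z *m T z *m Y z) /\
  (mero_eq l0
     (fun z => Delta_inv l0 r m z *m (V z *m T z *m Y z) *m Delta_inv l0 r m z)
     (Delta_inv l0 r m)
   <->
   mero_eq l0 (fun z => invmx (V z *m T z *m Y z)) (Delta_inv l0 r m)).
Proof.
move=> oO Ol hT _ _ hr [mono [UL [UR [[hUL [ULi [hULi iUL]]] [[hUR [URi [hURi iUR]]] nD]]]]].
move=> [hVh [hVroot [rV _]]] [hYh [hYroot [rY [nu [hnu [hsum hmono]]]]]].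
have [g hg] : {g : 'I_r -> C -> 'M[C]_(n, 1) & forall i,
    holo0 l0 (g i) /\ g i l0 != 0 /\
    near_pt l0 (fun z => T z *m col i (Y z) = chi0 l0 z ^+ nu i *: g i z)}.
  refine (boolp.choice (P := fun i gi => holo0 l0 gi /\ gi l0 != 0 /\
    near_pt l0 (fun z => T z *m col i (Y z) = chi0 l0 z ^+ nu i *: gi z)) _).
  move=> i; exact: hnu i.
move/near_ptP: iUL => iUL; move/near_ptP: iUR => iUR; move/near_ptP: nD => nD.
have ng : \forall z \near l0, forall i, md (g i) z /\
    T z *m col i (Y z) = chi0 l0 z ^+ nu i *: g i z.
  refine (@filter_forall C 'I_r (fun i z => md (g i) z /\
    T z *m col i (Y z) = chi0 l0 z ^+ nu i *: g i z) (nbhs l0) _ _) => i.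
  have [h1 [_ h3]] := hg i.
  exact: near2 (holo0_near h1) ((near_ptP _ _).1 h3).
have N := near2 (holo_near oO Ol hT) (near2 (holo_near oO Ol hVh)
  (near2 (holo_near oO Ol hYh) (near2 (holo0_near hUL) (near2 (holo0_near hULi)
  (near2 (holo0_near hUR) (near2 (holo0_near hURi) (near2 iUL (near2 iUR
  (near2 nD ng))))))))).
pose Dn z : 'M[C]_n := diag_mx (\row_(i < n) chi0 l0 z ^+ m i).
pose Dl z : 'M[C]_r := diag_mx (\row_(i < r) chi0 l0 z ^+ m i).
pose Nu z : 'M[C]_r := diag_mx (\row_(i < r) chi0 l0 z ^+ nu i).
pose X z := URi z *m Y z.
pose G z : 'M[C]_(n, r) := \matrix_(a, b) g b z a 0.
pose K z := UL z *m G z.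
have NX : \forall z \near l0, [/\ md X z, md G z, md K z, md V z &
    [/\ T z *m Y z = G z *m Nu z, Dn z *m X z = K z *m Nu z,
       ULi z *m UL z = 1%:M, UR z *m URi z = 1%:M & URi z *m UR z = 1%:M]].
  apply: filterS N => z [dT [dV [dY [dUL [dULi [dUR [dURi [[eUL1 eUL2] [[eUR1 eUR2] [eD eg]]]]]]]]]].
  have dG : md G z.
    move=> a b; have -> : (fun w => G w a b) = (fun w => g b w a 0).
      by apply/funext => w; rewrite mxE.
    exact: (eg b).1.
  have eTY : T z *m Y z = G z *m Nu z.
    apply/matrixP => a b.
    transitivity ((col b (T z *m Y z)) a 0); first by rewrite [RHS]mxE.
    by rewrite colE -mulmxA -colE (eg b).2 mul_mx_diag !mxE mulrC.
  have eDX : Dn z *m X z = K z *m Nu z.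
    rewrite /X /K /Dn -eD -!mulmxA (mulmxA (UR z)) eUR1 mul1mx eTY.
    by rewrite !mulmxA.
  split; [exact: md_mul| exact: dG| exact: md_mul| exact: dV|].
  split; [exact: eTY| exact: eDX| exact: eUL2| exact: eUR1| exact: eUR2].
have [dT0 [dV0 [dY0 [dUL0 [dULi0 [dUR0 [dURi0 [[eUL10 eUL20] [[eUR10 eUR20] [eD0 eg0]]]]]]]]]] := nbhs_singleton N.
have [dX0 dG0 dK0 _ [eTY0 eDX0 _ _ _]] := nbhs_singleton NX.
have rD : \rank (Dn l0) = \rank (T l0).
  by rewrite /Dn -eD0; apply: rank_UAU eUL20 eUR10.
have hD0 : Dn l0 = diag_mx (\row_(i < n) (0 : C) ^+ m i) by rewrite /Dn /chi0 subrr.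
have hr' : r = (n - \rank (Dn l0))%N by rewrite rD.
have [mz mp] := mult_struct mono hD0 hr'.
have rn : (r <= n)%N by rewrite hr leq_subr.
have eY0 : Y l0 = UR l0 *m X l0 by rewrite /X mulmxA eUR10 mul1mx.
have rX : \rank (X l0) = r.
  apply/eqP; rewrite eqn_leq rank_leq_col /= -{1}rY eY0; exact: mxrankM_maxr.
have hEnt : \forall z \near l0, forall (j : 'I_n) (i : 'I_r),
    chi0 l0 z ^+ m j * X z j i = K z j i * chi0 l0 z ^+ nu i.
  apply: filterS NX => z [_ _ _ _ [_ eDX _ _ _]] j i.
  exact: (entry_diag2 eDX j i).
have hnum : forall k : 'I_r, (nu k <= m k)%N.
  move=> k; have [i [j [ik kj Xne]]] := rank_witness rX k.
  have hij : (nu i <= m j)%N.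
    rewrite leqNgt; apply/negP => hlt.
    have := cancel_vanish (dX0 j i) (dK0 j i) (filterS (fun z h => h j i) hEnt) (ltnW hlt).
    rewrite /chi0 subrr expr0n subn_eq0 leqNgt hlt /= mulr0n mul0r.
    by move=> e; move: Xne; rewrite e eqxx.
  apply: leq_trans (hmono _ _ ik) _; apply: leq_trans hij _.
  exact: (mono (widen_ord rn k) j kj).
have hnue := sum_eq_le (a := nu) (b := fun i : 'I_r => m i) hnum hsum.
have eNu : forall z, Nu z = Dl z.
  by move=> z; rewrite /Nu /Dl; congr diag_mx; apply/rowP => i; rewrite !mxE hnue.
pose w := widen_ord rn.
have hEntm : \forall z \near l0, forall (j : 'I_n) (i : 'I_r),
    chi0 l0 z ^+ m j * X z j i = K z j i * chi0 l0 z ^+ m i.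
  by apply: filterS hEnt => z h j i; rewrite -hnue.
have hEnt0 := nbhs_singleton hEntm.
have Xz : forall (j : 'I_n) (b : 'I_r), (r <= j)%N -> X l0 j b = 0.
  move=> j b rj; have mb : (0 < m b)%N := mp (w b) (ltn_ord b).
  have := hEnt0 j b; rewrite /chi0 subrr (mz j rj) expr0 mul1r => ->.
  by rewrite expr0n eqn0Ngt mb /= mulr0n mulr0.
pose X1 := \matrix_(a < r, b < r) X l0 (w a) b.
have uX1 : \det X1 != 0.
  have h1 : forall a (j : 'I_n), (r <= j)%N -> (X l0)^T a j = 0.
    by move=> a j rj; rewrite mxE Xz.
  have := zero_cols_rank rn h1.
  have -> : \matrix_(a < r, b < r) (X l0)^T a (widen_ord rn b) = X1^T.
    by apply/matrixP => a b; rewrite !mxE.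
  rewrite !mxrank_tr rX => hle.
  have : X1 \in unitmx by rewrite -row_free_unit /row_free eqn_leq rank_leq_row hle.
  by rewrite unitmxE unitfE.
pose K1 := \matrix_(a < r, b < r) K l0 (w a) b.
have eK : \det K1 = \det X1.
  apply: (det_eq_m (m := m)) => a b hab;
    have hn2 : \forall z \near l0, chi0 l0 z ^+ m a * X z (w a) b = K z (w a) b * chi0 l0 z ^+ m b
      by apply: filterS hEntm => z h; exact: h (w a) b.
  - have hn : \forall z \near l0, chi0 l0 z ^+ m b * K z (w a) b = X z (w a) b * chi0 l0 z ^+ m a.
      by apply: filterS hEntm => z h; rewrite mulrC -(h (w a) b) mulrC.
    have := cancel_vanish (dK0 (w a) b) (dX0 (w a) b) hn (ltnW hab).
    by move=> e; rewrite /K1 mxE e /chi0 subrr expr0n subn_eq0 leqNgt hab /= mulr0n mul0r.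
  - have := cancel_vanish (dX0 (w a) b) (dK0 (w a) b) hn2 (ltnW hab).
    by move=> e; rewrite /X1 mxE e /chi0 subrr expr0n subn_eq0 leqNgt hab /= mulr0n mul0r.
  - have := cancel_vanish (dX0 (w a) b) (dK0 (w a) b) hn2 (eq_leq hab).
    by move=> e; rewrite /K1 /X1 mxE [RHS]mxE e /= hab subnn expr0 mul1r.
pose P z := V z *m ULi z.
have hVT0 : V l0 *m T l0 = 0.
  apply/matrixP => a j; have [_ [_ e]] := hVroot a.
  transitivity ((row a (V l0 *m T l0)) 0 j); first by rewrite [RHS]mxE.
  by rewrite row_mul e !mxE.
have hPD : P l0 *m Dn l0 = 0.
  have eT : T l0 = ULi l0 *m Dn l0 *m URi l0.
    by rewrite /Dn -eD0 !mulmxA eUL20 mul1mx -mulmxA eUR10 mulmx1.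
  transitivity (V l0 *m T l0 *m UR l0); last by rewrite hVT0 mul0mx.
  by rewrite eT /P !mulmxA -(mulmxA _ (URi l0)) eUR20 mulmx1.
have Pz : forall a (j : 'I_n), (r <= j)%N -> P l0 a j = 0.
  move=> a j rj; have := entry_mx_diag hPD a j.
  by rewrite /chi0 subrr (mz j rj) expr0 mulr1.
have eV0 : V l0 = P l0 *m UL l0 by rewrite /P -mulmxA eUL20 mulmx1.
have rP : \rank (P l0) = r.
  apply/eqP; rewrite eqn_leq rank_leq_row /= -{1}rV eV0; exact: mxrankM_maxl.
pose P1 := \matrix_(a < r, b < r) P l0 a (w b).
have uP1 : \det P1 != 0.
  have := zero_cols_rank rn Pz; rewrite rP => hle.
  have : P1 \in unitmx by rewrite -row_free_unit /row_free eqn_leq rank_leq_row hle.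
  by rewrite unitmxE unitfE.
have eB0 : V l0 *m G l0 = P1 *m K1.
  rewrite -(@split_prod _ r n rn (P l0) (K l0) Pz) /P /K -!mulmxA (mulmxA (ULi l0)) eUL20 mul1mx //.
have dB0 : \det (V l0 *m G l0) != 0 by rewrite eB0 det_mulmx mulf_neq0 // eK.
have nB : \forall z \near l0, \det (V z *m G z) != 0.
  exact: (dnear_neq0 (md_det (md_mul dV0 dG0)) dB0).
have hArep : \forall z \near l0, V z *m T z *m Y z = (V z *m G z) *m Dl z.
  apply: filterS NX => z [_ _ _ _ [eTY _ _ _ _]].
  by rewrite -mulmxA eTY eNu mulmxA.
have hA : \forall z \near l0, z != l0 -> V z *m T z *m Y z \in unitmx.
  apply: filterS (near2 hArep nB) => z [e hb] zl.
  rewrite e unitmx_mul !unitmxE !unitfE hb /= /Dl det_diag.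
  by apply/prodf_neq0 => i _; rewrite mxE expf_neq0 // /chi0 subr_eq0.
split.
  move=> /near_ptP h0; have [z [zl [h1 h2]]] := near_punct (near2 h0 hA).
  by move: (h2 zl); rewrite unitmxE unitfE h1 eqxx.
have Dl0 : Dl l0 = 0.
  apply/matrixP => i j; rewrite !mxE /chi0 subrr expr0n eqn0Ngt (mp (w i) (ltn_ord i)).
  by rewrite /= mulr0n mul0rn.
have hDD : forall z, z != l0 ->
    Delta_inv l0 r m z *m Dl z = 1%:M /\ Dl z *m Delta_inv l0 r m z = 1%:M.
  move=> z zl; rewrite /Delta_inv /Dl.
  apply: (diag_inv (d := fun i : 'I_r => chi0 l0 z ^+ m i)) => i.
  by rewrite expf_neq0 // /chi0 subr_eq0.
have dDl : forall z, md Dl z.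
  by move=> z; apply: (md_diag (d := fun (i : 'I_r) w => chi0 l0 w ^+ m i)) => i; apply: dchi.
split.
  move=> /mero_eq_near [H hH].
  pose M z := 1%:M - H z *m Dl z.
  have dM : \forall z \near l0, md M z.
    apply: filterS hH => z [dHz _].
    exact: (md_add (md_cst (A := 1%:M) (z := z)) (md_opp (md_mul dHz (dDl z)))).
  have M0 : \det (M l0) != 0 by rewrite /M Dl0 mulmx0 subr0 det1 oner_neq0.
  have nM : \forall z \near l0, \det (M z) != 0.
    exact: (dnear_neq0 (md_det (nbhs_singleton dM)) M0).
  apply: (near_mero_eq (H := fun z => ((\det (M z))^-1 *: \adj (M z)) *m (- H z))).
  apply: filterS (near2 hH (near2 dM (near2 nM hA))) => z [[dHz eH] [dMz [nMz hAz]]].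
  split; first exact: (md_mul (md_inv dMz nMz) (md_opp dHz)).
  move=> zl; have uM : M z \in unitmx by rewrite unitmxE unitfE.
  have -> : (\det (M z))^-1 *: \adj (M z) = invmx (M z) by rewrite /invmx uM.
  exact: (alg1 (hDD z zl).1 (hDD z zl).2 (eH zl) (erefl (M z)) uM (hAz zl)).
move=> /mero_eq_near [H hH].
pose M z := 1%:M - Dl z *m H z.
have dM : \forall z \near l0, md M z.
  apply: filterS hH => z [dHz _].
  exact: (md_add (md_cst (A := 1%:M) (z := z)) (md_opp (md_mul (dDl z) dHz))).
have M0 : \det (M l0) != 0 by rewrite /M Dl0 mul0mx subr0 det1 oner_neq0.
have nM : \forall z \near l0, \det (M z) != 0.
  exact: (dnear_neq0 (md_det (nbhs_singleton dM)) M0).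
apply: (near_mero_eq (H := fun z => - (H z *m ((\det (M z))^-1 *: \adj (M z))))).
apply: filterS (near2 hH (near2 dM (near2 nM hA))) => z [[dHz eH] [dMz [nMz hAz]]].
split; first exact: (md_opp (md_mul dHz (md_inv dMz nMz))).
move=> zl; have uM : M z \in unitmx by rewrite unitmxE unitfE.
have -> : (\det (M z))^-1 *: \adj (M z) = invmx (M z) by rewrite /invmx uM.
exact: (alg2 (hDD z zl).1 (hDD z zl).2 (eH zl) (erefl (M z)) uM (hAz zl)).
Qed.

End Main.

Unset Implicit Arguments.

Theorem mainTheorem6 (R : realType) (Omega : set (Cx R)) (l0 : Cx R)
  (n r : nat) (T : Cx R -> 'M[Cx R]_n) (m : nat -> nat)
  (V : Cx R -> 'M[Cx R]_(r, n)) (Y : Cx R -> 'M[Cx R]_(n, r)) :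
  open Omega -> Omega l0 ->
  holo Omega T ->
  ~ (forall z, Omega z -> \det (T z) = 0) ->
  \det (T l0) = 0 ->
  r = (n - \rank (T l0))%N ->
  partial_multiplicities l0 T m ->
  left_canonical Omega l0 T m V ->
  right_canonical Omega l0 T m Y ->
  mero_invertible l0 (fun z => V z *m T z *m Y z) /\
  (mero_eq l0
     (fun z => Delta_inv l0 r m z *m (V z *m T z *m Y z) *m Delta_inv l0 r m z)
     (Delta_inv l0 r m)
   <->
   mero_eq l0 (fun z => invmx (V z *m T z *m Y z)) (Delta_inv l0 r m)).
Proof. exact: main_aux. Qed.
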